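(* Let $A\in\{0,1\}^{n\times n}$ be a decomposable maximal matrix and let $n=\prod_{j=1}^m p_j^{k_j}$ be the prime factorization of $n$ (distinct primes $p_j$, exponents $k_j\ge1$). Let $\mathcal{L}=\{n_1:(n_1,n_2)\text{ is a compatible pair and } A \text{ admits an } (n_1,n_2)\text{ factorization}\}$. For any branch $\mathfrak{l}_0<\dots<\mathfrak{l}_q$ of $\mathcal{L}$, let $(n_1,\dots,n_\ell)=(\mathfrak{l}_0,\mathfrak{l}_1/\mathfrak{l}_0,\dots,\mathfrak{l}_q/\mathfrak{l}_{q-1},n/\mathfrak{l}_q)$ be the sizes of the factorization resulting from the branch. Then: (1) $n_i\in\{p_1,\dots,p_m\}$ for all $i=1,\dots,\ell$; (2) $\ell=\sum_{j=1}^m k_j$; (3) the number of branches of $\mathcal{L}$ is $\dfrac{\ell!}{\prod_{j=1}^m k_j!}$.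
   Context: Kronecker products of binary matrices use Boolean arithmetic ($1+1=1$). An $(n_1,\dots,n_m)$ factorization of $A$ is $A=A_1\otimes\cdots\otimes A_m$ with $A_i\in\{0,1\}^{n_i\times n_i}$, $\prod n_i=n$. A compatible pair for $n$ is $(n_1,n_2)$ with $n_1,n_2$ positive divisors of $n$ different from $1$ and $n$ and $n_1n_2=n$. $A$ is decomposable if it admits an $(n_1,\dots,n_\ell)$ factorization with $\ell>1$ and all $n_i>1$; a decomposable $A$ is maximal if it admits an $(n_1,n_2)$ factorization for every compatible pair $(n_1,n_2)$. For a finite set $\mathcal{X}\subset\mathbb{N}$, $\overline{\mathcal{X}}$ denotes the set of elements of $\mathcal{X}$ that are not multiples of another element of $\mathcal{X}$. A branch of $\mathcal{L}$ is a sequence $\mathfrak{l}_0,\dots,\mathfrak{l}_q$ ($q\ge0$) with $\mathfrak{l}_0\in\overline{\mathcal{L}}$; for $k\ge1$, $\mathfrak{l}_k\in\overline{\mathcal{M}_k}$ where $\mathcal{M}_k$ is the set of elements of $\mathcal{L}$ that are multiples of $\mathfrak{l}_{k-1}$ other than $\mathfrak{l}_{k-1}$; the sequence stops at $\mathfrak{l}_q$ when $\mathcal{L}$ contains no multiple of $\mathfrak{l}_q$ other than itself. *)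

(* Defs.v *)
From mathcomp Require Import all_boot all_order all_algebra.
Set Implicit Arguments. Unset Strict Implicit. Unset Printing Implicit Defensive.

(* Binary matrices of size k are 'M[bool]_k; the (Boolean) product of two
   entries is &&.  A Kronecker product only multiplies entries, so the
   Boolean addition 1+1=1 never intervenes. *)

(* entry (i,j) of a k x k binary matrix, indices given as nat (false if out of range) *)
Definition mentry (k : nat) (M : 'M[bool]_k) (i j : nat) : bool :=
  match @insub nat (fun x => x < k) 'I_k i, @insub nat (fun x => x < k) 'I_k j with
  | Some i', Some j' => M i' j'
  | _, _ => false
  end.

Definition mxlist := seq {k : nat & 'M[bool]_k}.

Definition sizes_of (fs : mxlist) : seq nat := map tag fs.

(* entry (i,j) of A_1 (x) A_2 (x) ... (x) A_m, with the usual index convention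
   (A (x) B)[i1*n2+i2, j1*n2+j2] = A[i1,j1] * B[i2,j2]; empty product = [1]. *)
Fixpoint kronE (fs : mxlist) (i j : nat) : bool :=
  match fs with
  | [::] => true
  | F :: rest =>
      let r := \prod_(k <- sizes_of rest) k in
      mentry (projT2 F) (i %/ r) (j %/ r) && kronE rest (i %% r) (j %% r)
  end.

Definition factorization (n : nat) (A : 'M[bool]_n) (ns : seq nat) : Prop :=
  \prod_(k <- ns) k = n /\
  exists fs : mxlist, sizes_of fs = ns /\
    forall i j : 'I_n, A i j = kronE fs i j.

Definition compatible (n n1 n2 : nat) : Prop :=
  [/\ 0 < n1, n1 %| n, n1 != 1, n1 != n &
   [/\ 0 < n2, n2 %| n, n2 != 1, n2 != n & n1 * n2 = n]].

Definition decomposable (n : nat) (A : 'M[bool]_n) : Prop :=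
  exists ns : seq nat, [/\ 1 < size ns, all (fun k => 1 < k) ns & factorization A ns].

Definition maximal (n : nat) (A : 'M[bool]_n) : Prop :=
  decomposable A /\
  forall n1 n2, compatible n n1 n2 -> factorization A [:: n1; n2].

Definition Lset (n : nat) (A : 'M[bool]_n) (n1 : nat) : Prop :=
  exists n2, compatible n n1 n2 /\ factorization A [:: n1; n2].

Definition in_overline (X : nat -> Prop) (x : nat) : Prop :=
  X x /\ forall y, X y -> y %| x -> y = x.

Definition proper_multiples (L : nat -> Prop) (a : nat) (x : nat) : Prop :=
  L x /\ a %| x /\ x <> a.

Fixpoint branch_steps (L : nat -> Prop) (a : nat) (s : seq nat) : Prop :=
  match s with
  | [::] => forall y, proper_multiples L a y -> False
  | b :: s' => in_overline (proper_multiples L a) b /\ branch_steps L b s'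
  end.

Definition branch (L : nat -> Prop) (s : seq nat) : Prop :=
  match s with
  | [::] => False
  | a :: s' => in_overline L a /\ branch_steps L a s'
  end.

Definition branch_sizes (n : nat) (s : seq nat) : seq nat :=
  match s with
  | [::] => [::]
  | a :: s' => a :: pairmap (fun x y => y %/ x) a s' ++ [:: n %/ last a s']
  end.

(* Main.v *)
Require Import Defs.
From mathcomp Require Import all_boot all_order all_algebra.
Set Warnings "-notation-overridden,-ambiguous-paths".
Set Implicit Arguments. Unset Strict Implicit. Unset Printing Implicit Defensive.

Section NT.
Variable n : nat.
Variable L : nat -> Prop.
Hypothesis HL : forall x, L x <-> [&& 1 < x, x < n & x %| n].

Lemma pm_iff a x : proper_multiples L a x <-> [&& 1 < x, x < n, x %| n, a %| x & x != a].
Proof.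
rewrite /proper_multiples; split.
  by case=> /HL /and3P[-> -> ->] [-> /eqP ->].
case/and5P=> x1 xn xdn -> /eqP xa; split=> //; apply/HL.
by rewrite x1 xn xdn.
Qed.

Lemma nonprime_div t : 1 < t -> ~~ prime t -> exists p, [/\ prime p, p %| t & p < t].
Proof.
move=> t1 npt; exists (pdiv t); split; [exact: pdiv_prime | exact: pdiv_dvd |].
rewrite ltn_neqAle dvdn_leq ?pdiv_dvd ?andbT ?(ltnW t1) //.
by apply: contraNneq npt => <-; apply: pdiv_prime.
Qed.

Lemma overline_step a b : 0 < a -> a %| n -> a < n ->
  in_overline (proper_multiples L a) b <-> [&& a %| b, prime (b %/ a), b %| n & b < n].
Proof.
move=> a0 an alt; split.
  case => /pm_iff /and5P[b1 bn bdn ab ba] Hmin.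
  rewrite ab bdn bn /= andbT.
  case/dvdnP: ab => t Db; subst b; rewrite mulnK //.
  have t1 : 1 < t.
    rewrite ltnNge leq_eqVlt ltnS leqn0; apply/negP => /orP[/eqP t1| /eqP t0].
      by move: ba; rewrite t1 mul1n eqxx.
    by move: b1; rewrite t0.
  apply/negPn/negP => npt.
  have [p [pp pt plt]] := nonprime_div t1 npt.
  have p1 := prime_gt1 pp.
  have H := Hmin (p * a).
  have : p * a = t * a.
    apply: H.
      apply/pm_iff; apply/and5P; split.
      - by rewrite (leq_trans p1) // leq_pmulr.
      - by rewrite (leq_ltn_trans _ bn) // leq_mul2r (ltnW plt) orbT.
      - by rewrite (dvdn_trans _ bdn) // dvdn_pmul2r.
      - exact: dvdn_mull.
      - by rewrite -{2}(mul1n a) eqn_pmul2r // neq_ltn p1 orbT.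
    by rewrite dvdn_pmul2r.
  move/eqP; rewrite eqn_pmul2r // => /eqP ept.
  by move: plt; rewrite ept ltnn.
case/and4P=> ab; case/dvdnP: ab => t Db; subst b; rewrite mulnK // => pt bdn bn.
have t1 := prime_gt1 pt.
split.
  apply/pm_iff; rewrite bn bdn dvdn_mull //=; apply/andP; split.
    by rewrite (leq_trans t1) // leq_pmulr.
  by rewrite -{2}(mul1n a) eqn_pmul2r // neq_ltn t1 orbT.
move=> y /pm_iff /and5P[y1 yn ydn ay ya] yb.
case/dvdnP: ay => u Dy; subst y.
move: yb; rewrite dvdn_pmul2r // => ut.
case/primeP: pt => _ /(_ _ ut) /orP[/eqP u1|/eqP ->] //.
by move: ya; rewrite u1 mul1n eqxx.
Qed.

Lemma empty_step a : 0 < a -> a %| n -> a < n ->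
  (forall y, proper_multiples L a y -> False) <-> prime (n %/ a).
Proof.
move=> a0 an alt.
have Dn : n = n %/ a * a by rewrite divnK.
have m1 : 1 < n %/ a.
  rewrite ltnNge leq_eqVlt ltnS leqn0; apply/negP => /orP[/eqP t1| /eqP t0].
    by move: alt; rewrite Dn t1 mul1n ltnn.
  by move: alt; rewrite Dn t0.
split.
  move=> H; apply/negPn/negP => npm.
  have [p [pp pt plt]] := nonprime_div m1 npm.
  have p1 := prime_gt1 pp.
  apply: (H (p * a)); apply/pm_iff; apply/and5P; split.
  - by rewrite (leq_trans p1) // leq_pmulr.
  - by rewrite Dn ltn_mul2r plt a0.
  - by rewrite Dn dvdn_pmul2r.
  - exact: dvdn_mull.
  - by rewrite -{2}(mul1n a) eqn_pmul2r // neq_ltn p1 orbT.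
move=> pm y /pm_iff /and5P[y1 yn ydn ay ya].
have Dy : y = y %/ a * a by rewrite divnK.
move: ydn; rewrite Dy Dn dvdn_pmul2r // => ut.
case/primeP: pm => _ /(_ _ ut) /orP[/eqP u1|/eqP e].
  by move: ya; rewrite Dy u1 mul1n eqxx.
by move: yn; rewrite Dy e -Dn ltnn.
Qed.


Fixpoint good a s := match s with
  | [::] => prime (n %/ a)
  | b :: s' => [&& a %| b, prime (b %/ a), b %| n, b < n & good b s']
  end.

Lemma pos_of_div a b : 0 < a -> a %| b -> prime (b %/ a) -> 0 < b.
Proof.
move=> a0 ab pt; rewrite -(divnK ab) muln_gt0 a0 andbT; exact: prime_gt0.
Qed.

Lemma steps_good s : forall a, 0 < a -> a %| n -> a < n -> (branch_steps L a s <-> good a s).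
Proof.
elim: s => [|b s IH] a a0 an alt /=; first exact: empty_step.
split.
  case=> /(@overline_step a b a0 an alt) /and4P[ab pt bdn bn] H.
  rewrite ab pt bdn bn /=; apply/(IH b) => //; exact: pos_of_div ab pt.
case/and5P=> ab pt bdn bn g; split.
  by apply/(@overline_step a b a0 an alt); rewrite ab pt bdn bn.
by apply/(IH b) => //; exact: pos_of_div ab pt.
Qed.

Lemma in_overline_ext (X Y : nat -> Prop) : (forall x, X x <-> Y x) ->
  forall b, in_overline X b <-> in_overline Y b.
Proof.
move=> H b; split; case=> /H Xb Hm; split=> // y /H; exact: Hm.
Qed.

Lemma branch_good s : 1 < n -> ~~ prime n -> (branch L s <-> good 1 s).
Proof.
move=> n1 nnp; case: s => [|a s] /=.
  by rewrite divn1 (negbTE nnp).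
have E : forall x, L x <-> proper_multiples L 1 x.
  move=> x; split.
    move/HL => /and3P[x1 xn xdn]; apply/pm_iff; rewrite x1 xn xdn dvd1n /=.
    by rewrite neq_ltn x1 orbT.
  by case/pm_iff/and5P => x1 xn xdn _ _; apply/HL; rewrite x1 xn xdn.
have ov := @overline_step 1 a (ltn0Sn 0) (dvd1n n) n1.
split.
  case=> /(in_overline_ext E) /ov /and4P[_ pa adn an].
  move/(steps_good); rewrite divn1 in pa.
  by move=> /(_ (prime_gt0 pa) adn an) g; rewrite dvd1n divn1 pa adn an.
case/and5P=> _ pa adn an g; rewrite divn1 in pa; split.
  by apply/(in_overline_ext E)/ov; rewrite dvd1n divn1 pa adn an.
by apply/(steps_good _ (prime_gt0 pa) adn an).
Qed.

Definition bsz a s := pairmap (fun x y => y %/ x) a s ++ [:: n %/ last a s].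

Lemma prod_prime_gt0 r : all prime r -> 0 < \prod_(k <- r) k.
Proof.
elim: r => [|x r IH] /=; first by rewrite big_nil.
by case/andP=> px pr; rewrite big_cons muln_gt0 prime_gt0 // IH.
Qed.

Lemma good_bsz s : forall a, 0 < a -> a %| n -> good a s ->
  all prime (bsz a s) /\ a * \prod_(k <- bsz a s) k = n.
Proof.
elim: s => [|b s IH] a a0 an /=.
  by move=> pn; rewrite /bsz /= pn big_seq1 mulnC divnK.
case/and5P=> ab pt bdn bn g.
have b0 := pos_of_div a0 ab pt.
have [H1 H2] := IH b b0 bdn g.
rewrite /bsz /= -/(bsz b s) pt H1 big_cons; split=> //.
by rewrite mulnA (mulnC a) divnK.
Qed.

Fixpoint chn a r := match r with
  | [::] => [::]
  | x :: r' => if r' is [::] then [::] else (a * x) :: chn (a * x) r'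
  end.

Lemma bsz_chn r : forall a, 0 < a -> all prime r -> a * \prod_(k <- r) k = n ->
  r != [::] -> bsz a (chn a r) = r.
Proof.
elim: r => [|x r IH] a a0 //= /andP[px pr].
case: r IH pr => [|y r] IH pr.
  by rewrite big_seq1 => e _; rewrite /bsz /= -e mulKn.
rewrite big_cons mulnA => e _.
rewrite /bsz /= -/(bsz (a * x) _) IH //.
  by rewrite mulKn.
by rewrite muln_gt0 a0 prime_gt0.
Qed.

Lemma good_chn r : forall a, 0 < a -> all prime r -> a * \prod_(k <- r) k = n ->
  r != [::] -> good a (chn a r).
Proof.
elim: r => [|x r IH] a a0 //= /andP[px pr].
case: r IH pr => [|y r] IH pr.
  by rewrite big_seq1 => e _ /=; rewrite -e mulKn.
rewrite big_cons mulnA => e _ /=.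
have ax0 : 0 < a * x by rewrite muln_gt0 a0 prime_gt0.
rewrite dvdn_mulr // mulKn // px -e dvdn_mulr //=.
rewrite IH // andbT.
move: pr => /andP[py pr].
rewrite big_cons ltn_Pmulr //.
by rewrite (leq_trans (prime_gt1 py)) // leq_pmulr // prod_prime_gt0.
Qed.

Lemma chn_bsz s : forall a, good a s -> chn a (bsz a s) = s.
Proof.
elim: s => [|b s IH] a //=.
case/and5P=> ab pt bdn bn g.
rewrite /bsz /= -/(bsz b s).
have [y [r E]] : exists y r, bsz b s = y :: r.
  by rewrite /bsz; case: (pairmap _ _ _) => [|y r]; eexists; eexists.
rewrite {1}E /=.
have -> : a * (b %/ a) = b by rewrite mulnC divnK.
by rewrite IH.
Qed.

End NT.
Lemma sum_count_undup (T : eqType) (s : seq T) :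
  \sum_(x <- undup s) count_mem x s = size s.
Proof.
rewrite -(perm_size (perm_count_undup s)) size_flatten /shape -map_comp sumnE big_map.
by apply: eq_bigr => x _; rewrite /= size_nseq.
Qed.

Lemma prod_fact_rem (T : eqType) (s u : seq T) x : uniq u -> x \in u -> x \in s ->
  \prod_(y <- u) (count_mem y s)`! =
  count_mem x s * \prod_(y <- u) (count_mem y (rem x s))`!.
Proof.
move=> Uu xu xs.
have Hc y : count_mem y s = (x == y) + count_mem y (rem x s).
  by rewrite (permP (perm_to_rem xs)) /=.
rewrite (bigD1_seq x) //= (bigD1_seq x) //= Hc eqxx add1n factS mulnA.
congr (_ * _); apply: eq_bigr => y yx; rewrite Hc.
by rewrite eq_sym (negbTE yx).
Qed.

Lemma perms_count (T : eqType) (s u : seq T) : uniq u -> {subset s <= u} ->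
  size (permutations s) * \prod_(y <- u) (count_mem y s)`! = (size s)`!.
Proof.
move=> Uu; move Dm: (size s) => m; elim: m s Dm => [|m IH] s Dm su.
  case: s Dm su => // _ _; rewrite big1_seq //.
rewrite (perm_size (permutationsE _)) ?Dm // size_allpairs_dep sumnE big_map.
rewrite big_distrl /=.
rewrite (eq_big_seq (fun x => count_mem x s * m`!)); last first.
  move=> x; rewrite mem_undup => xs.
  rewrite ((@prod_fact_rem _ s u x Uu (su x xs) xs)) mulnCA IH //.
    by rewrite size_rem // Dm.
  by move=> y /mem_rem /su.
by rewrite -big_distrl /= sum_count_undup Dm factS mulnC.
Qed.

Lemma count_prod r : all prime r -> forall y, count_mem y r = logn y (\prod_(k <- r) k).
Proof.
elim: r => [|x r IH] /=; first by move=> _ y; rewrite big_nil logn1.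
case/andP=> px pr y; rewrite big_cons lognM; last 2 first.
- exact: prime_gt0 px.
- exact: prod_prime_gt0 pr.
by rewrite (logn_prime y px) -IH // eq_sym.
Qed.

Lemma prod_nseq k p : \prod_(i <- nseq k p) i = p ^ k.
Proof. by elim: k => [|k IH]; rewrite ?big_nil // big_cons IH expnS. Qed.

Lemma sumn_indic (u : seq nat) (f : nat -> nat) y : uniq u ->
  sumn [seq (p == y) * f p | p <- u] = (y \in u) * f y.
Proof.
elim: u => [|x u IH] //= /andP[xu uu]; rewrite IH // inE.
case: (eqVneq x y) => [<-|xy] /=.
  by rewrite (negbTE xu) mul1n addn0.
by rewrite mul0n add0n.
Qed.

Theorem theorem1 (n : nat) (A : 'M[bool]_n) (hA : maximal A) :
  [/\ (forall s, branch (Lset A) s -> all (fun k => k \in primes n) (branch_sizes n s)),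
      (forall s, branch (Lset A) s ->
         size (branch_sizes n s) = \sum_(p <- primes n) logn p n) &
      exists bs : seq (seq nat),
        [/\ uniq bs, (forall s, s \in bs <-> branch (Lset A) s) &
            size bs = (\sum_(p <- primes n) logn p n)`! %/
                      \prod_(p <- primes n) (logn p n)`!]].
Proof.
have [[ns [sz allg [pn _]]] hmax] := hA.
have [n1 nnp] : 1 < n /\ ~~ prime n.
  case: ns sz allg pn => [|x [|y rest]] // _ /= /and3P[x1 y1 ar].
  rewrite big_cons big_cons => pn.
  have P0 : 0 < \prod_(k <- rest) k.
    elim: rest ar {pn} => [|z rest IHr] /=; first by rewrite big_nil.
    by case/andP=> z1 /IHr H; rewrite big_cons muln_gt0 H (ltnW z1).
  have P1 : 1 < y * \prod_(k <- rest) k.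
    by rewrite (leq_trans y1) // leq_pmulr.
  split; first by rewrite -pn (leq_trans P1) // leq_pmull // ltnW.
  apply/negP => /primeP [_ /(_ x)]; rewrite -pn dvdn_mulr // => /(_ isT).
  case/orP => /eqP e; first by rewrite e in x1.
  move: e; rewrite -{1}(muln1 x) => /eqP; rewrite eqn_pmul2l ?(ltnW x1) // => /eqP e1.
  by rewrite -e1 in P1.
have n0 : 0 < n by rewrite ltnW.
have HL : forall x, Lset A x <-> [&& 1 < x, x < n & x %| n].
  move=> x; split.
    case=> n2 [[x0 xn x1 xnn _] _].
    apply/and3P; split => //.
      by rewrite ltn_neqAle eq_sym x1.
    by rewrite ltn_neqAle xnn (dvdn_leq n0 xn).
  case/and3P=> x1 xn xdn.
  have xn2 : x * (n %/ x) = n by rewrite mulnC divnK.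
  have c : compatible n x (n %/ x).
    have x0 : 0 < x by apply: ltnW.
    split=> //.
    - by rewrite neq_ltn x1 orbT.
    - by rewrite neq_ltn xn.
    split=> //.
    - by rewrite divn_gt0 // dvdn_leq.
    - by rewrite -{2}xn2 dvdn_mull.
    - apply/eqP => e; move: xn2; rewrite e muln1 => e'.
      by move: xn; rewrite e' ltnn.
    - apply/eqP => e; move: xn2; rewrite e -{2}(mul1n n).
      move/eqP; rewrite eqn_pmul2r // => /eqP e1; by move: x1; rewrite e1.
  by exists (n %/ x); split => //; apply: hmax.
pose fl := flatten [seq nseq (logn p n) p | p <- primes n].
have cnt_fl : forall y, count_mem y fl = logn y n.
  move=> y; rewrite count_flatten -map_comp.
  rewrite (eq_map (g := fun p => (p == y) * logn p n)); last first.
    by move=> p /=; rewrite count_nseq.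
  rewrite sumn_indic ?primes_uniq //.
  by case: (boolP (y \in primes n)) => [_|]; rewrite ?mul1n // -logn_gt0 lt0n negbK => /eqP ->.
have fl_primes : forall x, x \in fl -> x \in primes n.
  by move=> x /flattenP [s /mapP [p pp ->]]; rewrite mem_nseq => /andP[_ /eqP ->].
have prod_fl : \prod_(k <- fl) k = n.
  rewrite big_flatten /= big_map.
  rewrite [RHS](prod_prime_decomp n0) prime_decompE big_map.
  by apply: eq_bigr => p _; rewrite prod_nseq.
have size_fl : size fl = \sum_(p <- primes n) logn p n.
  by rewrite size_flatten /shape -map_comp sumnE big_map; apply: eq_bigr => p _; rewrite /= size_nseq.
have permfl : forall r, perm_eq r fl -> [/\ all prime r, \prod_(k <- r) k = n & r != [::]].
  move=> r pr.
  have ap : all prime r.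
    by apply/allP => x; rewrite (perm_mem pr) => /fl_primes; rewrite mem_primes => /andP[].
  have pp : \prod_(k <- r) k = n by rewrite (perm_big _ pr) prod_fl.
  split=> //; apply/eqP => r0; move: pp; rewrite r0 big_nil => e.
  by move: n1; rewrite -e.
have br : forall s, branch (Lset A) s ->
    perm_eq (bsz n 1 s) fl /\ branch_sizes n s = bsz n 1 s.
  move=> s /(branch_good HL s n1 nnp) g.
  have [ap pp] := @good_bsz n s 1 (ltn0Sn 0) (dvd1n n) g.
  rewrite mul1n in pp.
  split; last first.
    move: g ap pp; case: s => [|a s] /=; first by rewrite divn1 (negbTE nnp).
    by move=> *; rewrite /bsz /= divn1.
  apply/allP => y _ /=; by rewrite count_prod // pp cnt_fl.
split.
- move=> s /br [pr ->]; apply/allP => x; rewrite (perm_mem pr); exact: fl_primes.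
- by move=> s /br [pr ->]; rewrite (perm_size pr).
exists (map (chn 1) (permutations fl)); split.
- rewrite map_inj_in_uniq ?permutations_uniq //.
  move=> r1 r2; rewrite !mem_permutations => /permfl [a1 p1 ne1] /permfl [a2 p2 ne2] e.
  rewrite -(@bsz_chn n r1 1 (ltn0Sn 0) a1 _ ne1) ?mul1n //.
  by rewrite e bsz_chn ?mul1n.
- move=> s; split.
    case/mapP => r; rewrite mem_permutations => /permfl [a1 p1 ne1] ->.
    by apply/(branch_good HL _ n1 nnp)/good_chn; rewrite ?mul1n.
  move=> bs; have [pr _] := br s bs.
  apply/mapP; exists (bsz n 1 s); first by rewrite mem_permutations.
  by rewrite chn_bsz //; apply/(branch_good HL s n1 nnp).
rewrite size_map.
have H := @perms_count _ fl (primes n) (primes_uniq n) fl_primes.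
rewrite size_fl in H.
have E : \prod_(y <- primes n) (count_mem y fl)`! = \prod_(p <- primes n) (logn p n)`!.
  by apply: eq_bigr => p _; rewrite cnt_fl.
rewrite E in H; rewrite -H mulnK //; apply: prodn_gt0 => i; exact: fact_gt0.
Qed.
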